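(* Let $\mathbb{K}$ be a field of characteristic $0$, $\mathcal{S}=\mathbb{K}[x_0,\dots,x_n]$, and let $f\in\mathcal{S}_d$ have a Generalized Additive Decomposition $f=\sum_{i=1}^s\omega_i\ell_i^{d-k_i}$ with each $\ell_i=x_0+\xi_{i,1}x_1+\dots+\xi_{i,n}x_n$. Let $\underline\varphi:=\sum_{i=1}^s\omega_i^{d,\ell_i,\mathbf x}(\underline{\mathbf z})e_{\ell_i}(\underline{\mathbf z})$ and let $I_{\underline\varphi}$ be the homogeneous ideal spanned by all homogeneous $p\in\mathcal{S}$ with $p\star\underline\varphi=0$. Then $I_{\underline\varphi}$ is apolar to $f$, i.e. $f^*(p)=0$ for every $p\in(I_{\underline\varphi})_d$.
   Context: $\mathcal{S}^*$ is identified with $\mathbb{K}[[z_0,\dots,z_n]]$ via $\sum_\alpha\varphi_\alpha\underline{\mathbf z}^\alpha/\alpha!\leftrightarrow(\underline{\mathbf x}^\alpha\mapsto\varphi_\alpha)$; $p\star\varphi$ is $q\mapsto\varphi(pq)$; $e_\ell(\underline{\mathbf z})=\exp(\sum_i\underline\xi_iz_i)$ for $\ell=\sum\underline\xi_ix_i$; $f^*:=\frac1{d!}f(z_0,\dots,z_n)\in\mathcal{S}_d^*$. A GAD of $f$ is $f=\sum_i\omega_i\ell_i^{d-k_i}$ with $0\le k_i\le d$, $\omega_i\in\mathcal{S}_{k_i}$, $\ell_i\in\mathcal{S}_1$ pairwise non-proportional, $\ell_i\nmid\omega_i$. For $\mathbf x=(x_1,\dots,x_n)$, writing $\omega_i=\sum_{j}\omega_{i,j}\ell_i^{k_i-j}$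 with $\omega_{i,j}\in\mathbb{K}[x_1,\dots,x_n]_j$, $\omega_i^{d,\ell_i,\mathbf x}:=\frac1{d!}\sum_j(d-j)!\,\omega_{i,j}$, read in the variables $\underline{\mathbf z}$. *)

(* Defs.v *)
From HB Require Import structures.
From mathcomp Require Import all_boot all_order all_algebra.
From mathcomp Require Import mpoly.
Set Implicit Arguments. Unset Strict Implicit. Unset Printing Implicit Defensive.
Import Order.TTheory GRing.Theory.
Local Open Scope ring_scope.

Section ApolarDefs.
Variables (K : fieldType) (n : nat).
(* S = K[x_0, ..., x_n]; the variable x_i is 'X_i with i : 'I_n.+1. *)
Local Notation S := {mpoly K[n.+1]}.
Local Notation mon := 'X_{1..n.+1}.

(* Formal power series in z_0..z_n, given by their ordinary coefficients:
   a represents sum_alpha a(alpha) z^alpha. *)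
Definition series := mon -> K.

Definition ser_of_poly (p : S) : series := fun m => p@_m.

Definition ser_mul (a b : series) : series := fun m =>
  \sum_(u : 'X_{1..n.+1 < (mdeg m).+1}) \sum_(v : 'X_{1..n.+1 < (mdeg m).+1})
     (if (val u + val v)%MM == m then a (val u) * b (val v) else 0).

(* exp(L(z)) = sum_k L^k / k! for a linear form L (no constant term):
   its coefficient at z^m only comes from k = |m|. *)
Definition ser_exp_lin (L : S) : series := fun m =>
  (L ^+ mdeg m)@_m / ((mdeg m)`!)%:R.

(* Elements of S^* = linear functionals on S, determined by their values on
   the monomial basis x^alpha. *)
Definition dual := mon -> K.

Definition mfact (m : mon) : nat := (\prod_(i < n.+1) (m i)`!)%N.

(* the identification S^* = K[[z]] :
   sum_alpha phi_alpha z^alpha/alpha!  <->  (x^alpha |-> phi_alpha) *)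
Definition dual_of_series (a : series) : dual := fun m => (mfact m)%:R * a m.

Definition dapp (phi : dual) (p : S) : K := \sum_(m <- msupp p) p@_m * phi m.

Definition star (p : S) (phi : dual) : dual := fun m => dapp phi (p * 'X_[m]).

Definition annihilates (p : S) (phi : dual) : Prop := forall m, star p phi m = 0.

Definition is_homogeneous (p : S) : Prop := exists e : nat, p \is e.-homog.

Definition in_ann_ideal (phi : dual) (p : S) : Prop :=
  exists r : seq (S * S),
    (forall x, x \in r -> is_homogeneous x.2 /\ annihilates x.2 phi) /\
    p = \sum_(x <- r) x.1 * x.2.

(* the linear form x_0 + xi_1 x_1 + ... + xi_n x_n  (xi j is xi_{j+1}) *)
Definition lin_form (xi : 'I_n -> K) : S :=
  'X_ord0 + \sum_(j < n) xi j *: 'X_(lift ord0 j).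

Definition e_ser (l : S) : series := ser_exp_lin l.

Definition fstar (d : nat) (f : S) : dual :=
  dual_of_series (fun m => (d`!%:R)^-1 * f@_m).

(* omega^{d,l,x} := (1/d!) sum_j (d-j)! omega_j , given the decomposition
   omega = sum_{j <= k} omega_j l^(k-j) *)
Definition omega_dx (d k : nat) (omj : nat -> S) : S :=
  (d`!%:R)^-1 *: \sum_(j < k.+1) ((d - j)`!)%:R *: omj j.

Definition phi_GAD (s d : nat) (xi : 'I_s -> 'I_n -> K) (k : 'I_s -> nat)
    (omj : 'I_s -> nat -> S) : dual :=
  dual_of_series (fun m =>
    \sum_(i < s) ser_mul (ser_of_poly (omega_dx d (k i) (omj i)))
                         (e_ser (lin_form (xi i))) m).

End ApolarDefs.

(* Main.v *)
Require Import Defs.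
From HB Require Import structures.
From mathcomp Require Import all_boot all_order all_algebra.
From mathcomp Require Import mpoly.
Import Order.TTheory GRing.Theory.
Local Open Scope ring_scope.
Set Implicit Arguments. Unset Strict Implicit.

Section H.
Variables (K : fieldType) (n : nat).
Local Notation S := {mpoly K[n.+1]}.

Lemma ser_mulE (A : S) (b : series K n) m :
  ser_mul (ser_of_poly A) b m =
  \sum_(k : 'X_{1..n.+1 < (mdeg m).+1, (mdeg m).+1} | m == (k.1 + k.2)%MM)
      A@_k.1 * b k.2.
Proof.
rewrite /ser_mul /ser_of_poly pair_bigA /= [RHS]big_mkcond /=.
by apply: eq_bigr => k _; rewrite eq_sym.
Qed.

Lemma dapp_sub (phi : dual K n) (p : S) (r : seq 'X_{1..n.+1}) :
  uniq r -> {subset msupp p <= r} ->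
  dapp phi p = \sum_(m <- r) p@_m * phi m.
Proof.
move=> ur sub; rewrite /dapp [RHS](bigID (fun m => m \in msupp p)) /=.
rewrite [X in _ + X]big1 ?addr0; last first.
  by move=> m Hm; apply/eqP; rewrite mulf_eq0 mcoeff_eq0 Hm.
rewrite -[RHS]big_filter.
apply: perm_big; apply: uniq_perm => //.
  by rewrite filter_uniq.
by move=> m; rewrite mem_filter; case H: (m \in msupp p) => //=; rewrite sub.
Qed.

Lemma dappD phi (p q : S) : dapp phi (p + q) = dapp phi p + dapp phi q.
Proof.
set r := undup (msupp p ++ msupp q ++ msupp (p + q)).
have ur : uniq r by rewrite undup_uniq.
rewrite (@dapp_sub _ _ r) // ?(@dapp_sub _ p r) ?(@dapp_sub _ q r) //.
- by rewrite -big_split; apply: eq_bigr => m _; rewrite mcoeffD mulrDl.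
- by move=> m Hm; rewrite mem_undup !mem_cat Hm ?orbT.
- by move=> m Hm; rewrite mem_undup !mem_cat Hm ?orbT.
- by move=> m Hm; rewrite mem_undup !mem_cat Hm ?orbT.
Qed.

Lemma dappZ phi c (p : S) : dapp phi (c *: p) = c * dapp phi p.
Proof.
rewrite (@dapp_sub _ _ (msupp p)) //; last first.
  by move=> m; apply: contraLR; rewrite -!mcoeff_eq0 mcoeffZ => /eqP ->; rewrite mulr0.
by rewrite /dapp mulr_sumr; apply: eq_bigr => m _; rewrite mcoeffZ mulrA.
Qed.

Lemma dapp0 phi : dapp phi (0 : S) = 0.
Proof. by rewrite /dapp msupp0 big_nil. Qed.

Lemma dapp_sum phi (T : Type) (r : seq T) (F : T -> S) :
  dapp phi (\sum_(x <- r) F x) = \sum_(x <- r) dapp phi (F x).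
Proof.
elim: r => [|a r IH]; first by rewrite !big_nil dapp0.
by rewrite !big_cons dappD IH.
Qed.

Lemma ann_mul phi (p q : S) : annihilates p phi -> dapp phi (p * q) = 0.
Proof.
move=> H; rewrite [q]mpolyE mulr_sumr dapp_sum big1 // => m _.
by rewrite -scalerAr dappZ; have := H m; rewrite /star => ->; rewrite mulr0.
Qed.


Lemma serA (A L : S) (j d : nat) m : A \is j.-homog -> mdeg m = d ->
  ser_mul (ser_of_poly A) (ser_exp_lin L) m = (A * L ^+ (d - j))@_m / ((d - j)`!)%:R.
Proof.
move=> hA hm; rewrite ser_mulE mcoeffM mulr_suml; apply: eq_bigr => k /eqP Hk.
rewrite /ser_exp_lin mulrA.
have [->|nz] := eqVneq (A@_k.1) 0; first by rewrite !mul0r.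
have e1 : mdeg k.1 = j.
  by apply: (dhomogP _ _ _ hA); move: nz; rewrite mcoeff_eq0 negbK.
have e2 : mdeg k.2 = (d - j)%N.
  have H := congr1 (@mdeg _) Hk; rewrite mdegD e1 in H.
  have X : (j + mdeg k.2 = d)%N by rewrite -H; exact: hm.
  by rewrite -X addKn.
by rewrite e2.
Qed.


Lemma ser_mulZ c (A : S) b m :
  ser_mul (ser_of_poly (c *: A)) b m = c * ser_mul (ser_of_poly A) b m.
Proof.
by rewrite !ser_mulE mulr_sumr; apply: eq_bigr => kk _; rewrite mcoeffZ mulrA.
Qed.

Lemma ser_mul_lin (N : nat) (c : 'I_N -> K) (A : 'I_N -> S) b m :
  ser_mul (ser_of_poly (\sum_(j < N) c j *: A j)) b m =
  \sum_(j < N) c j * ser_mul (ser_of_poly (A j)) b m.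
Proof.
rewrite ser_mulE.
under eq_bigr => kk _ do rewrite raddf_sum /= mulr_suml.
rewrite exchange_big /=; apply: eq_bigr => j _.
by rewrite -ser_mulZ ser_mulE.
Qed.

End H.

From mathcomp Require Import zify.
Unset Implicit Arguments. Set Strict Implicit.

Theorem lemma5p1 (K : fieldType) (n d s : nat)
  (charK0 : [pchar K] =i pred0)
  (f : {mpoly K[n.+1]}) (xi : 'I_s -> 'I_n -> K) (k : 'I_s -> nat)
  (omega : 'I_s -> {mpoly K[n.+1]}) (omj : 'I_s -> nat -> {mpoly K[n.+1]}) :
  f \is d.-homog ->
  (* the GAD  f = sum_i omega_i l_i^(d - k_i) *)
  (forall i, (k i <= d)%N) ->
  (forall i, omega i \is (k i).-homog) ->
  (forall i j, i != j ->
     ~ exists c : K, lin_form (xi i) = c *: lin_form (xi j)) ->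
  (forall i, ~ exists q, omega i = lin_form (xi i) * q) ->
  f = \sum_(i < s) omega i * lin_form (xi i) ^+ (d - k i) ->
  (* omega_i = sum_j omega_{i,j} l_i^(k_i - j), omega_{i,j} in K[x_1..x_n]_j *)
  (forall i j, omj i j \is j.-homog) ->
  (forall i j m, m \in msupp (omj i j) -> m ord0 = 0%N) ->
  (forall i, omega i = \sum_(j < (k i).+1) omj i j * lin_form (xi i) ^+ (k i - j)) ->
  forall p : {mpoly K[n.+1]},
    in_ann_ideal (phi_GAD d xi k omj) p -> p \is d.-homog ->
    dapp (fstar d f) p = 0.
Proof.
move=> hf hk homo _ _ hfE homj _ homega p [r [hr ->]] hp.
have H0 : dapp (phi_GAD d xi k omj) (\sum_(x <- r) x.1 * x.2) = 0.
  rewrite dapp_sum big_seq big1 // => x xr; rewrite mulrC; apply: ann_mul.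
  by case: (hr x xr).
rewrite -H0; move: hp; set P := \sum_(x <- r) _ => hp.
rewrite /dapp; apply: eq_big_seq => m mP.
have md : mdeg m = d by apply: (dhomogP _ _ _ hp).
congr (_ * _); rewrite /fstar /phi_GAD /dual_of_series; congr (_ * _).
rewrite hfE raddf_sum mulr_sumr; apply: eq_bigr => i _.
rewrite /omega_dx /e_ser ser_mulZ ser_mul_lin; congr (_ * _).
rewrite homega mulr_suml raddf_sum; apply: eq_bigr => j _.
have hj := ltn_ord j; have hki := hk i.
rewrite -mulrA -exprD.
have -> : (k i - j + (d - k i) = d - j)%N by lia.
rewrite (serA _ (homj i j) md).
rewrite [RHS]mulrC divfK //.
by move/pcharf0P: charK0 => ch; rewrite ch gtn_eqF // fact_gt0.
Qed.
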